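(* Let $p,q\in\mathbb{N}$, $a\in\{1,\dots,p\}$, $b\in\{1,\dots,q\}$ and $n\in\mathbb{N}_0$. Set \[ \mathscr N_{p,q,a,b}(n)\coloneq\frac{n+1-\bigl(\frac{2-a}{p}+\frac{2-b}{q}\bigr)}{\frac1p+\frac1q},\qquad d_{b,a}(N)\coloneq\left\lceil\frac{N+2-a}{p}\right\rceil+\left\lceil\frac{N+2-b}{q}\right\rceil-1 . \] (1) For every $N\in\mathbb{N}_0$ with $N\ge\mathscr N_{p,q,a,b}(n)$ one has $n\le d_{b,a}(N)$. (2) Consequently, let $T$ be a semi-infinite complex matrix with $T_{i,j}=0$ whenever $j<i-p$ or $j>i+q$, let $\nu\in\mathbb{C}^{p\times p}$, $\xi\in\mathbb{C}^{q\times q}$ be invertible lower triangular matrices, and let $u_a^\nu,u_b^\xi,e_a^\nu,e_b^\xi$ be as described in the context. Defining $m_{n,a,b}\coloneq u_b^\xi\,T^n\,u_a^\nu$, one has \[ (e_b^\xi)^\top\bigl(T^{[N]}\bigr)^n e_a^\nu=m_{n,a,b}\quad\text{for all } N\in\mathbb{N}_0 \text{ with } N\ge\mathscr N_{p,q,a,b}(n), \] so that $(e_b^\xi)^\top(T^{[N]})^n e_a^\nu$ is independent of $N$ for $N\ge\mathscr N_{p,q,a,b}(n)$.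
   Context: $T^{[N]}=(T_{i,j})_{0\le i,j\le N}$ is the principal truncation of size $N+1$. $u_a^\nu$ is the semi-infinite column vector whose entries with indices $0,\dots,p-1$ are those of $\nu^{-\top}e_a^{[p]}$ and whose other entries are $0$; $u_b^\xi$ is the semi-infinite row vector whose entries with indices $0,\dots,q-1$ are those of $(e_b^{[q]})^\top\xi^{-1}$ and whose other entries are $0$ ($e_a^{[p]}$, $e_b^{[q]}$ standard basis vectors). $e_a^\nu,e_b^\xi\in\mathbb{C}^{N+1}$ are the vectors of entries with indices $0,\dots,N$ of $u_a^\nu$ and $(u_b^\xi)^\top$. Powers of the banded semi-infinite matrix $T$ are ordinary matrix products (finite sums), with $T^0=I$. *)

(* Defs.v *)
From HB Require Import structures.
From mathcomp Require Import all_boot all_order all_algebra.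
From mathcomp Require Import reals.
From mathcomp Require Import complex.
Set Implicit Arguments. Unset Strict Implicit. Unset Printing Implicit Defensive.
Import Order.TTheory GRing.Theory Num.Theory.
Local Open Scope ring_scope.

(* Conventions: complex numbers are R[i] for R : realType.
   Indices a, b are 1-based naturals with 1 <= a <= p, 1 <= b <= q. *)

Definition threshN (p q a b n : nat) : rat :=
  (n%:Q + 1 - ((2 - a%:Q) / p%:Q + (2 - b%:Q) / q%:Q)) / (1 / p%:Q + 1 / q%:Q).

Definition dba (p q a b N : nat) : int :=
  Num.ceil ((N%:Q + 2 - a%:Q) / p%:Q) + Num.ceil ((N%:Q + 2 - b%:Q) / q%:Q) - 1.

Definition smat (C : Type) := nat -> nat -> C.

Definition banded (C : nzRingType) (p q : nat) (T : smat C) : Prop :=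
  forall i j : nat, ((j + p < i)%N \/ (i + q < j)%N) -> T i j = 0.

(** Powers of a semi-infinite matrix T with T i k = 0 for k > i + q:
    T^0 = I, T^(n+1) = T * T^n, where the product is the ordinary
    (here finite) sum over k; terms with k > i + q vanish for banded T. *)
Fixpoint spow (C : nzRingType) (q : nat) (T : smat C) (n : nat) : smat C :=
  match n with
  | 0 => fun i j => (i == j)%:R
  | n'.+1 => fun i j => \sum_(k < (i + q).+1) T i k * spow q T n' k j
  end.

Definition evec (C : nzRingType) (p a : nat) : 'cV[C]_p :=
  \col_(i < p) (i.+1 == a)%:R.

Definition ext0 (C : nzRingType) (p : nat) (v : 'cV[C]_p) (i : nat) : C :=
  oapp (fun k : 'I_p => v k 0) 0 (insub i).

Definition u_nu (C : comUnitRingType) (p a : nat) (nu : 'M[C]_p) : nat -> C :=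
  ext0 ((invmx nu)^T *m evec C p a).

Definition u_xi (C : comUnitRingType) (q b : nat) (xi : 'M[C]_q) : nat -> C :=
  ext0 (((evec C q b)^T *m invmx xi)^T).

(** m_{n,a,b} = u_b^xi T^n u_a^nu (finite sum, since u's have finite support). *)
Definition mnab (C : comUnitRingType) (p q a b : nat) (T : smat C)
    (nu : 'M[C]_p) (xi : 'M[C]_q) (n : nat) : C :=
  \sum_(i < q) \sum_(j < p) u_xi b xi i * spow q T n i j * u_nu a nu j.

Definition trunc (C : nzRingType) (N : nat) (T : smat C) : 'M[C]_N.+1 :=
  \matrix_(i, j) T i j.

Definition tvec (C : nzRingType) (N : nat) (u : nat -> C) : 'cV[C]_N.+1 :=
  \col_(i < N.+1) u i.
Arguments mnab {C} p q a b T nu xi n.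

(* Main.v *)
Require Import Defs.
From HB Require Import structures.
From mathcomp Require Import all_boot all_order all_algebra.
From mathcomp Require Import reals.
From mathcomp Require Import complex.
From mathcomp Require Import ring lra zify.
Import Order.TTheory GRing.Theory Num.Theory.
Local Open Scope ring_scope.

Lemma thresh_key (p q a b n N : nat) : (0 < p)%N -> (0 < q)%N ->
  threshN p q a b n <= N%:Q ->
  n%:Q + 1 <= (N%:Q + 2 - a%:Q) / p%:Q + (N%:Q + 2 - b%:Q) / q%:Q.
Proof.
move=> p0 q0; rewrite /threshN.
have pQ : 0 < p%:Q by rewrite ltr0n.
have qQ : 0 < q%:Q by rewrite ltr0n.
have s0 : 0 < 1 / p%:Q + 1 / q%:Q by rewrite addr_gt0 // divr_gt0.
rewrite ler_pdivrMr // => h.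
have -> : (N%:Q + 2 - a%:Q) / p%:Q + (N%:Q + 2 - b%:Q) / q%:Q =
   N%:Q * (1 / p%:Q + 1 / q%:Q) + ((2 - a%:Q) / p%:Q + (2 - b%:Q) / q%:Q).
  rewrite !mulrDr !mulrDl; field.
  by rewrite !lt0r_neq0.
by rewrite -lerBlDr.
Qed.

Lemma part1 (p q a b n : nat) (ha : (1 <= a <= p)%N) (hb : (1 <= b <= q)%N) :
  forall N : nat, threshN p q a b n <= N%:Q -> n%:Z <= dba p q a b N.
Proof.
move=> N hN.
have p0 : (0 < p)%N by case/andP: ha => h1 h2; exact: leq_trans h1 h2.
have q0 : (0 < q)%N by case/andP: hb => h1 h2; exact: leq_trans h1 h2.
have := @thresh_key p q a b n N p0 q0 hN.
set X := (_ / p%:Q); set Y := (_ / q%:Q) => h.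
rewrite /dba -/X -/Y -ltzD1 subrK -(ltr_int rat) intrD.
apply: (lt_le_trans _ (lerD (ceil_ge X) (ceil_ge Y))).
by apply: lt_le_trans h; rewrite ltrDl.
Qed.
Lemma sum_ext (C : nzRingType) (m K : nat) (F : nat -> C) : (m <= K)%N ->
  (forall i, (m <= i < K)%N -> F i = 0) -> \sum_(i < m) F i = \sum_(i < K) F i.
Proof.
move=> mK F0; rewrite (big_ord_widen K F mK) big_mkcond; apply: eq_bigr => i _.
case: ifP => // /negbT; rewrite -leqNgt => h; rewrite F0 // h ltn_ord.
by [].
Qed.

Lemma spow_low (C : nzRingType) p q (T : smat C) : banded p q T ->
  forall n k j, (j + n * p < k)%N -> spow q T n k j = 0.
Proof.
move=> bT; elim=> [|n IH] k j h /=.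
  by move: h; rewrite mul0n addn0 => h; rewrite gtn_eqF.
apply: big1 => m _; have [h1|h1] := ltnP (m + p) k.
  by rewrite bT ?mul0r //; left.
rewrite IH ?mulr0 //; lia.
Qed.

Lemma spow_up (C : nzRingType) q (T : smat C) :
  forall n i j, (i + n * q < j)%N -> spow q T n i j = 0.
Proof.
elim=> [|n IH] i j h /=.
  by move: h; rewrite mul0n addn0 => h; rewrite ltn_eqF.
apply: big1 => m _; rewrite IH ?mulr0 //.
have := ltn_ord m; lia.
Qed.

Lemma trunc_pow (C : nzRingType) p q (T : smat C) N : banded p q T ->
  forall n (i j : 'I_N.+1),
  (forall t, (t <= n)%N -> (i + t * q <= N)%N || (j + (n - t) * p <= N)%N) ->
  (trunc N T ^+ n) i j = spow q T n i j.
Proof.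
move=> bT; elim=> [|n IH] i j good.
  by rewrite expr0 mxE.
rewrite exprS -mulmxE mxE /=.
set F := fun k => T i k * spow q T n k j.
have -> : \sum_(k < N.+1) trunc N T i k * (trunc N T ^+ n) k j
          = \sum_(k < N.+1) F k.
  apply: eq_bigr => k _; rewrite /F mxE.
  have [hk|hk] := leqP (k : nat) (i + q)%N.
    rewrite IH // => t tn.
    have := good t.+1 tn; rewrite subSS.
    case/orP => h; apply/orP; [left|right] => //; lia.
  by rewrite bT ?mul0r //; right.
rewrite (@sum_ext _ N.+1 (N.+1 + (i + q).+1) F) ?leq_addr //; last first.
  move=> k /andP[k1 k2]; rewrite /F.
  have [hk|hk] := ltnP (i + q)%N k; first by rewrite bT ?mul0r //; right.
  have := good 1%N isT; rewrite subn1 /= mul1n.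
  case/orP => h; first by lia.
  rewrite (@spow_low _ p q T bT) ?mulr0 //; lia.
rewrite (@sum_ext _ (i + q).+1 (N.+1 + (i + q).+1) F) ?leq_addl //.
move=> k /andP[k1 k2]; by rewrite /F bT ?mul0r //; right.
Qed.
Lemma trig_inv (F : fieldType) n (A : 'M[F]_n) : is_trig_mx A -> A \in unitmx ->
  forall i j : 'I_n, (i < j)%N -> invmx A i j = 0.
Proof.
move=> At Au.
have Aii : forall i, A i i != 0.
  move=> i; move: Au; rewrite unitmxE unitfE det_trig // => /prodf_neq0.
  by apply.
move/is_trig_mxP: At => At.
have AB := mulmxV Au.
suff H : forall m (i j : 'I_n), (i < m)%N -> (i < j)%N -> invmx A i j = 0.
  by move=> i j; apply: H (ltnSn i).
elim=> [//|m IH] i j im ij.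
have [/IH -> //|] := ltnP i m => mi.
have : (A *m invmx A) i j = 0 by rewrite AB mxE; case: eqVneq => // e; move: ij; rewrite e ltnn.
rewrite mxE (bigD1 i) //= big1 ?addr0.
  by move/eqP; rewrite mulf_eq0 (negbTE (Aii i)) /= => /eqP.
move=> k ki; have [ik|ki'] := ltnP i k; first by rewrite At ?mul0r.
rewrite IH ?mulr0 //.
  have : (k : nat) != i by rewrite val_eqE.
  lia.
lia.
Qed.

Lemma unu0 (F : fieldType) p a (nu : 'M[F]_p) : is_trig_mx nu -> nu \in unitmx ->
  forall j, (a <= j)%N -> u_nu a nu j = 0.
Proof.
move=> nt nu1 j aj; rewrite /u_nu /ext0.
case: insubP => [k _ kv|//] /=.
rewrite mxE big1 // => l _; rewrite !mxE.
case: eqP => [la|_]; last by rewrite mulr0.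
rewrite trig_inv ?mul0r //; have kv2 : (k:nat) = j := kv; lia.
Qed.

Lemma uxi0 (F : fieldType) q b (xi : 'M[F]_q) : is_trig_mx xi -> xi \in unitmx ->
  forall j, (b <= j)%N -> u_xi b xi j = 0.
Proof.
move=> nt nu1 j aj; rewrite /u_xi /ext0.
case: insubP => [k _ kv|//] /=.
rewrite !mxE big1 // => l _; rewrite !mxE.
case: eqP => [la|_]; last by rewrite mul0r.
rewrite trig_inv ?mulr0 //; have kv2 : (k:nat) = j := kv; lia.
Qed.

Theorem lemma2 (p q a b n : nat)
  (ha : (1 <= a <= p)%N) (hb : (1 <= b <= q)%N) :
  (forall N : nat, threshN p q a b n <= N%:Q -> n%:Z <= dba p q a b N) /\
  (forall (R : realType) (T : smat R[i]) (nu : 'M[R[i]]_p) (xi : 'M[R[i]]_q),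
     banded p q T ->
     is_trig_mx nu -> nu \in unitmx ->
     is_trig_mx xi -> xi \in unitmx ->
     forall N : nat, threshN p q a b n <= N%:Q ->
       (((tvec N (u_xi b xi))^T *m (trunc N T) ^+ n *m tvec N (u_nu a nu)) 0 0
        = mnab p q a b T nu xi n)).
Proof.
split; first exact: part1.
move=> R T nu xi bT nt nu1 xt xi1 N hN.
have p0 : (0 < p)%N by case/andP: ha => h1 h2; exact: leq_trans h1 h2.
have q0 : (0 < q)%N by case/andP: hb => h1 h2; exact: leq_trans h1 h2.
have key := @thresh_key p q a b n N p0 q0 hN.
have good : forall i j, (i < b)%N -> (j < a)%N -> forall t, (t <= n)%N ->
    (i + t * q <= N)%N || (j + (n - t) * p <= N)%N.
  move=> i j ib ja t tn; apply/negPn/negP; rewrite negb_or -!ltnNge => /andP[h1 h2].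
  have h1' : (N + 2 <= b + t * q)%N by lia.
  have h2' : (N + 2 <= a + (n - t) * p)%N by lia.
  move: h1' h2'; rewrite -(ler_nat rat) -[(N + 2 <= _)%N](ler_nat rat).
  rewrite !natrD !natrM natrB // => h1' h2'.
  have hX : (N%:Q + 2 - b%:Q) / q%:Q <= t%:Q.
    by rewrite ler_pdivrMr ?ltr0n //; lra.
  have hY : (N%:Q + 2 - a%:Q) / p%:Q <= n%:Q - t%:Q.
    by rewrite ler_pdivrMr ?ltr0n //; lra.
  lra.
set G := fun i j => u_xi b xi i * spow q T n i j * u_nu a nu j.
have Gz : forall i j, (N < i)%N || (N < j)%N -> G i j = 0.
  move=> i j h; have [ib|bi] := ltnP i b; last by rewrite /G uxi0 // !mul0r.
  have [ja|aj] := ltnP j a; last by rewrite /G unu0 // mulr0.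
  case/orP: h => h.
    have := good i j ib ja 0%N isT; rewrite subn0 /= mul0n addn0 leqNgt h /= => h'.
    by rewrite /G (@spow_low _ p q T bT) ?mulr0 ?mul0r //; lia.
  have := good i j ib ja n (leqnn n); rewrite subnn mul0n addn0 (leqNgt j) h orbF => h'.
  by rewrite /G spow_up ?mulr0 ?mul0r //; lia.
rewrite mxE.
under eq_bigr => j _ do rewrite mxE big_distrl /=.
rewrite exchange_big /=.
have -> : \sum_(i < N.+1) \sum_(j < N.+1)
    (tvec N (u_xi b xi))^T 0 i * (trunc N T ^+ n) i j * tvec N (u_nu a nu) j 0
    = \sum_(i < N.+1) \sum_(j < N.+1) G i j.
  apply: eq_bigr => i _; apply: eq_bigr => j _; rewrite !mxE.
  have [ib|bi] := ltnP i b; last by rewrite /G uxi0 // !mul0r.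
  have [ja|aj] := ltnP j a; last by rewrite /G unu0 // !mulr0.
  by rewrite /G (@trunc_pow _ p q T N bT) // => t tn; apply: good.
set K := (N.+1 + p + q)%N.
transitivity (\sum_(i < K) \sum_(j < K) G i j).
  have E1 : forall i, \sum_(j < N.+1) G i j = \sum_(j < K) G i j.
    move=> i; apply: (@sum_ext _ N.+1 K (G i)); first by rewrite /K; lia.
    by move=> j /andP[j1 j2]; apply: Gz; rewrite j1 orbT.
  under eq_bigr => i _ do rewrite E1.
  apply: (@sum_ext _ N.+1 K (fun i => \sum_(j < K) G i j)); first by rewrite /K; lia.
  by move=> i /andP[i1 i2]; apply: big1 => j _; apply: Gz; rewrite i1.
rewrite /mnab.
have E2 : forall i, \sum_(j < p) u_xi b xi i * spow q T n i j * u_nu a nu j = \sum_(j < K) G i j.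
  move=> i; apply: (@sum_ext _ p K (G i)); first by rewrite /K; lia.
  move=> j /andP[j1 j2]; rewrite /G unu0 ?mulr0 //.
  by case/andP: ha => _ h; exact: leq_trans h j1.
symmetry; transitivity (\sum_(i < q) \sum_(j < K) G i j).
  by apply: eq_bigr => i _; exact: (E2 i).
apply: (@sum_ext _ q K (fun i => \sum_(j < K) G i j)); first by rewrite /K; lia.
move=> i /andP[i1 i2]; apply: big1 => j _; rewrite /G uxi0 ?mul0r //.
by case/andP: hb => _ h; exact: leq_trans h i1.
Qed.
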